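(* Let $M$ be a positive integer and $q\in\overline{\mathcal U}\setminus\{M+1\}$. Then for every $\varepsilon>0$ there exists $\delta>0$ such that \[\dim_H\big(\overline{\mathcal U}\cap(q-\delta,q+\delta)\big)\le(1+\varepsilon)\dim_H\pi_{q+\delta}(\mathbf U_\delta(q)),\] where $\mathbf U_\delta(q)=\{\alpha(p):p\in\overline{\mathcal U}\cap(q-\delta,q+\delta)\}$.
   Context: Fix a positive integer $M$; all sequences have digits in $\{0,1,\dots,M\}$. For $r>1$ put $\pi_r((x_i))=\sum_{i\ge1}x_ir^{-i}$. $\mathcal U$ is the set of $q\in(1,M+1]$ such that $1$ has exactly one sequence $(x_i)$ with $\pi_q((x_i))=1$, and $\overline{\mathcal U}$ is its closure. For $p\in(1,M+1]$, $\alpha(p)$ is the quasi-greedy $p$-expansion of $1$, i.e. the lexicographically largest sequence not ending in $0^\infty$ with $\pi_p=1$. *)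

(* Defs.v *)
From Stdlib Require Import Reals Lra.
From Coquelicot Require Import Coquelicot.
Open Scope R_scope.

(* A digit sequence (x_i)_{i>=1} is represented by x : nat -> nat, where
   x k stands for x_{k+1}.  Digits lie in {0,...,M}. *)
Definition digits (M : nat) (x : nat -> nat) : Prop := forall k, (x k <= M)%nat.

Definition pi (r : R) (x : nat -> nat) : R :=
  Series (fun k => INR (x k) / r ^ (S k)).

Definition U (M : nat) (q : R) : Prop :=
  1 < q <= INR M + 1 /\
  exists x, (digits M x /\ pi q x = 1) /\
    forall y, digits M y -> pi q y = 1 -> y = x.

Definition Ubar (M : nat) (q : R) : Prop :=
  forall e, 0 < e -> exists u, U M u /\ Rabs (u - q) < e.

Definition lex_le (y x : nat -> nat) : Prop :=
  y = x \/ exists n, (forall k, (k < n)%nat -> y k = x k) /\ (y n < x n)%nat.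

Definition not_ending_in_zeros (x : nat -> nat) : Prop :=
  forall n, exists k, (n <= k)%nat /\ x k <> 0%nat.

Definition quasi_greedy (M : nat) (p : R) (a : nat -> nat) : Prop :=
  digits M a /\ not_ending_in_zeros a /\ pi p a = 1 /\
  forall b, digits M b -> not_ending_in_zeros b -> pi p b = 1 -> lex_le b a.

Definition Udelta (M : nat) (delta q : R) (a : nat -> nat) : Prop :=
  exists p, Ubar M p /\ q - delta < p < q + delta /\ quasi_greedy M p a.

Definition pi_image (r : R) (S : (nat -> nat) -> Prop) (y : R) : Prop :=
  exists x, S x /\ y = pi r x.

(* For subsets of R we cover by
   nondegenerate closed intervals [a_i, b_i] (any set of diameter d lies in
   a closed interval of length d, and can be enlarged slightly). *)
Definition H_null (s : R) (E : R -> Prop) : Prop :=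
  forall eta eps, 0 < eta -> 0 < eps ->
    exists a b : nat -> R,
      (forall i, a i < b i /\ b i - a i <= eta) /\
      (forall x, E x -> exists i, a i <= x <= b i) /\
      (forall n, sum_n (fun i => Rpower (b i - a i) s) n <= eps).

Definition hdim (E : R -> Prop) : Rbar :=
  Glb_Rbar (fun s => 0 <= s /\ H_null s E).

(* Main.v *)
Require Import Defs.
From Stdlib Require Import Reals Lra Lia ClassicalEpsilon Classical FunctionalExtensionality List Cantor FinFun.
From Coquelicot Require Import Coquelicot.
Open Scope R_scope.

Definition shift (n : nat) (x : nat -> nat) : nat -> nat := fun k => x (n + k)%nat.

Fixpoint ps (p : R) (x : nat -> nat) (n : nat) : R :=
  match n with O => 0 | S m => ps p x m + INR (x m) / p ^ S m end.

Lemma sum_f_ps p x m : sum_f_R0 (fun k => INR (x k) / p ^ S k) m = ps p x (S m).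
Proof. induction m. simpl; ring. rewrite tech5, IHm. reflexivity. Qed.

Lemma inv_lt1 p : 1 < p -> / p < 1.
Proof. intros. rewrite <- Rinv_1. apply Rinv_lt_contravar; lra. Qed.

Lemma term_bound M p x k : digits M x -> 1 < p ->
  0 <= INR (x k) / p ^ S k <= INR M / p * (/ p) ^ k.
Proof.
  intros Hd Hp.
  assert (0 < p ^ k) by (apply pow_lt; lra).
  assert (INR (x k) <= INR M) by (apply le_INR; apply Hd).
  assert (0 <= INR (x k)) by apply pos_INR.
  rewrite pow_inv. replace (p ^ S k) with (p * p ^ k) by reflexivity.
  split.
  - apply Rmult_le_pos; [lra|]. left; apply Rinv_0_lt_compat; nra.
  - unfold Rdiv. rewrite Rinv_mult. rewrite <- Rmult_assoc.
    apply Rmult_le_compat_r; [left; apply Rinv_0_lt_compat; lra|].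
    apply Rmult_le_compat_r; [left; apply Rinv_0_lt_compat; lra|]. lra.
Qed.


Lemma ex_geom c p : 1 < p -> ex_series (fun k => c * (/ p) ^ k).
Proof.
  intros Hp. apply (ex_series_scal_l c (fun k => (/ p) ^ k)).
  exists (/ (1 - / p)). apply is_series_geom.
  rewrite Rabs_pos_eq. apply inv_lt1; lra. left; apply Rinv_0_lt_compat; lra.
Qed.

Lemma ex_series_digits M p x : digits M x -> 1 < p ->
  ex_series (fun k => INR (x k) / p ^ S k).
Proof.
  intros Hd Hp.
  apply (@ex_series_le R_AbsRing R_CompleteNormedModule _ (fun k => INR M / p * (/ p) ^ k)).
  - intros k. unfold norm; simpl. unfold abs; simpl.
    destruct (term_bound M p x k Hd Hp). simpl in *. rewrite Rabs_pos_eq; lra.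
  - apply ex_geom; auto.
Qed.

Lemma pi_split M p x n : digits M x -> 1 < p ->
  pi p x = ps p x n + pi p (shift n x) / p ^ n.
Proof.
  intros Hd Hp. destruct n.
  - replace (pi p (shift 0 x)) with (pi p x) by reflexivity. simpl. field.
  - unfold pi. rewrite (Series_incr_n _ (S n)); [|lia|eapply ex_series_digits; eauto].
    simpl pred. rewrite sum_f_ps. f_equal.
    transitivity (Series (fun k => INR (shift (S n) x k) / p ^ S k * / p ^ S n)).
    + apply Series_ext; intros k; unfold shift.
      replace (S (S n + k)) with (S k + S n)%nat by lia. rewrite pow_add.
      assert (0 < p ^ S n) by (apply pow_lt; lra).
      assert (0 < p ^ S k) by (apply pow_lt; lra).
      field. split; lra.
    + rewrite Series_scal_r. unfold pi. reflexivity.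
Qed.

Lemma pi_bounds M p x : digits M x -> 1 < p -> 0 <= pi p x <= INR M / (p - 1).
Proof.
  intros Hd Hp. unfold pi. split.
  - replace 0 with (Series (fun k => 0 * 0)).
    2:{ rewrite (Series_scal_l 0 (fun _ => 0)). ring. }
    apply Series_le. intros k. destruct (term_bound M p x k Hd Hp). split; lra.
    eapply ex_series_digits; eauto.
  - replace (INR M / (p - 1)) with (Series (fun k => INR M / p * (/ p) ^ k)).
    + apply Series_le. intros k. apply term_bound; auto. apply ex_geom; auto.
    + rewrite Series_scal_l. rewrite (is_series_unique _ (/ (1 - / p))).
      field. lra.
      apply is_series_geom.
      rewrite Rabs_pos_eq. apply inv_lt1; lra. left; apply Rinv_0_lt_compat; lra.
Qed.

Lemma pi_base M p r x : digits M x -> 1 < p -> p <= r -> pi r x <= p / r * pi p x.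
Proof.
  intros Hd Hp Hr. unfold pi. rewrite <- Series_scal_l.
  apply Series_le.
  - intros k. assert (0 < p ^ k) by (apply pow_lt; lra).
    assert (0 < r ^ k) by (apply pow_lt; lra).
    assert (p ^ k <= r ^ k) by (apply pow_incr; lra).
    assert (0 <= INR (x k)) by apply pos_INR.
    replace (r ^ S k) with (r * r ^ k) by reflexivity.
    replace (p ^ S k) with (p * p ^ k) by reflexivity.
    split. apply Rmult_le_pos; [lra|]. left; apply Rinv_0_lt_compat. nra.
    unfold Rdiv. rewrite !Rinv_mult.
    replace (p * / r * (INR (x k) * (/ p * / p ^ k))) with (INR (x k) * (/ r * / p ^ k)) by (field; split; lra).
    apply Rmult_le_compat_l; [lra|]. apply Rmult_le_compat_l.
    left; apply Rinv_0_lt_compat; lra. apply Rinv_le_contravar; lra.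
  - apply (ex_series_scal_l (p / r) (fun k => INR (x k) / p ^ S k)).
    eapply ex_series_digits; eauto.
Qed.

Lemma ps_nonneg p x n : 0 < p -> 0 <= ps p x n.
Proof. intros Hp. induction n; simpl. lra.
  assert (0 < p * p ^ n) by (apply Rmult_lt_0_compat; [lra| apply pow_lt; lra]).
  assert (0 <= INR (x n)) by apply pos_INR.
  assert (0 <= INR (x n) / (p * p^n)) by (apply Rmult_le_pos; [lra| left; apply Rinv_0_lt_compat; lra]). lra. Qed.

Lemma ps_prefix p x y n : (forall k, (k < n)%nat -> x k = y k) -> ps p x n = ps p y n.
Proof. induction n; intros H; simpl. auto. rewrite IHn by (intros; apply H; lia).
  rewrite H by lia. auto. Qed.

Lemma pi_pos M p x : digits M x -> 1 < p -> (exists j, x j <> 0%nat) -> 0 < pi p x.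
Proof.
  intros Hd Hp [j Hj]. rewrite (pi_split M p x (S j)) by auto.
  pose proof (pi_bounds M p (shift (S j) x)) as HB.
  assert (digits M (shift (S j) x)) by (intros k; apply Hd).
  destruct HB as [HB _]; auto.
  assert (0 < p ^ S j) by (apply pow_lt; lra).
  assert (0 <= pi p (shift (S j) x) / p ^ S j) by (apply Rmult_le_pos; [lra| left; apply Rinv_0_lt_compat; lra]).
  simpl ps. pose proof (ps_nonneg p x j). 
  assert (0 < INR (x j)) by (apply lt_0_INR; lia).
  assert (0 < INR (x j) / p ^ S j) by (apply Rmult_lt_0_compat; [lra| apply Rinv_0_lt_compat; lra]).
  simpl in *. lra.
Qed.


Fixpoint chooseD (f : nat -> bool) (m : nat) : nat :=
  match m with O => O | S m' => if f (S m') then S m' else chooseD f m' end.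

Lemma cD_le f m : (chooseD f m <= m)%nat.
Proof. induction m; simpl. lia. destruct (f (S m)); lia. Qed.

Lemma cD_true f m : f O = true -> f (chooseD f m) = true.
Proof. intros H; induction m; simpl. auto. destruct (f (S m)) eqn:E; auto. Qed.

Lemma cD_max f m : (chooseD f m < m)%nat -> f (S (chooseD f m)) = false.
Proof.
  induction m; simpl; intros H. lia.
  destruct (f (S m)) eqn:E. lia.
  destruct (Nat.lt_ge_cases (chooseD f m) m) as [Hl|Hg]. auto.
  pose proof (cD_le f m). replace (chooseD f m) with m by lia. auto.
Qed.

Definition test (p x s : R) (k d : nat) : bool :=
  if Rlt_dec (s + INR d / p ^ S k) x then true else false.

Fixpoint st (M : nat) (p x : R) (k : nat) : R :=
  match k with
  | O => 0
  | S k' => st M p x k' + INR (chooseD (test p x (st M p x k') k') M) / p ^ S k'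
  end.

Definition qg (M : nat) (p x : R) (k : nat) : nat := chooseD (test p x (st M p x k) k) M.

Lemma st_ps M p x k : st M p x k = ps p (qg M p x) k.
Proof. induction k. reflexivity.
  change (st M p x (S k)) with (st M p x k + INR (qg M p x k) / p ^ S k).
  change (ps p (qg M p x) (S k)) with (ps p (qg M p x) k + INR (qg M p x k) / p ^ S k).
  rewrite IHk. reflexivity. Qed.

Lemma st_S M p x k : st M p x (S k) = st M p x k + INR (qg M p x k) / p ^ S k.
Proof. reflexivity. Qed.

Lemma qg_digits M p x : digits M (qg M p x).
Proof. intros k. apply cD_le. Qed.

Section Alg.
Variables (M : nat) (p x : R).
Hypothesis Hp : 1 < p.
Hypothesis HpM : p <= INR M + 1.
Hypothesis Hx : 0 < x.
Hypothesis HxM : x <= INR M / (p - 1).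

Lemma qg_inv k : st M p x k < x /\ x - st M p x k <= INR M / (p - 1) / p ^ k.
Proof.
  induction k.
  - simpl. split. lra. replace (p ^ 0) with 1 by reflexivity. lra.
  - destruct IHk as [H1 H2]. rewrite st_S.
    assert (HT : test p x (st M p x k) k O = true).
    { unfold test. destruct Rlt_dec as [|n]; auto. exfalso; apply n. simpl. lra. }
    pose proof (cD_true _ M HT) as Ht. fold (qg M p x k) in Ht.
    unfold test in Ht. destruct Rlt_dec as [Hlt|]; [|discriminate].
    split; [exact Hlt|].
    assert (0 < p ^ k) by (apply pow_lt; lra).
    replace (p ^ S k) with (p * p ^ k) in * by reflexivity.
    destruct (Nat.lt_ge_cases (qg M p x k) M) as [Hl|Hg].
    + pose proof (cD_max _ _ Hl) as Hf. fold (qg M p x k) in Hf.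
      unfold test in Hf. destruct Rlt_dec as [|Hn]; [discriminate|].
      apply Rnot_lt_le in Hn. rewrite S_INR in Hn.
      assert (1 <= INR M / (p - 1)).
      { apply (Rmult_le_reg_r (p - 1)). lra. unfold Rdiv. rewrite Rmult_assoc, Rinv_l; lra. }
      replace (p ^ S k) with (p * p ^ k) in Hn by reflexivity.
      assert (x - (st M p x k + INR (qg M p x k) / (p * p ^ k)) <= 1 / (p * p ^ k)).
      { unfold Rdiv in *. rewrite Rmult_plus_distr_r in Hn. lra. }
      assert (1 / (p * p ^ k) <= INR M / (p - 1) / (p * p ^ k)).
      { unfold Rdiv. apply Rmult_le_compat_r. left; apply Rinv_0_lt_compat; nra. unfold Rdiv in H0; lra. }
      lra.
    + pose proof (cD_le (test p x (st M p x k) k) M). fold (qg M p x k) in H0.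
      replace (qg M p x k) with M by lia.
      replace (INR M / (p - 1) / (p * p ^ k)) with (INR M / (p - 1) / p ^ k - INR M / (p * p ^ k)).
      lra. field. split; lra.
Qed.

Lemma zero_lim (q0 z C : R) (N : nat) : 1 < q0 ->
  (forall n, (N <= n)%nat -> Rabs z <= C / q0 ^ n) -> z = 0.
Proof.
  intros Hq H. destruct (Req_dec z 0) as [|Hz]; auto. exfalso.
  assert (Hz' : 0 < Rabs z) by (apply Rabs_pos_lt; auto).
  assert (HC : 0 < C).
  { specialize (H N (le_n _)). assert (0 < q0 ^ N) by (apply pow_lt; lra).
    destruct (Rle_dec C 0); [|lra]. exfalso.
    assert (C / q0 ^ N <= 0). { unfold Rdiv. apply Rmult_le_0_r; [lra|]. left; apply Rinv_0_lt_compat; lra. }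
    lra. }
  destruct (pow_lt_1_zero (/ q0)) with (y := Rabs z / C) as [N' HN'].
  rewrite Rabs_pos_eq. apply inv_lt1; lra. left; apply Rinv_0_lt_compat; lra.
  apply Rdiv_lt_0_compat; lra.
  specialize (HN' (N + N')%nat ltac:(lia)). specialize (H (N + N')%nat ltac:(lia)).
  rewrite Rabs_pos_eq in HN' by (apply pow_le; left; apply Rinv_0_lt_compat; lra).
  rewrite pow_inv in HN'.
  assert (0 < q0 ^ (N + N')) by (apply pow_lt; lra).
  assert (C * / q0 ^ (N + N') < Rabs z).
  { apply (Rmult_lt_compat_l C) in HN'; auto. unfold Rdiv in HN'.
    replace (C * (Rabs z * / C)) with (Rabs z) in HN' by (field; lra). lra. }
  unfold Rdiv in H. lra.
Qed.

Lemma qg_pi : pi p (qg M p x) = x.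
Proof.
  apply Rminus_diag_uniq.
  apply (zero_lim p _ (2 * (INR M / (p - 1))) 0); auto.
  intros n _. rewrite (pi_split M p _ n (qg_digits M p x) Hp).
  destruct (qg_inv n) as [H1 H2]. rewrite <- st_ps.
  assert (digits M (shift n (qg M p x))) by (intros k; apply qg_digits).
  destruct (pi_bounds M p (shift n (qg M p x))) as [B1 B2]; auto.
  assert (0 < p ^ n) by (apply pow_lt; lra).
  assert (0 <= pi p (shift n (qg M p x)) / p ^ n <= INR M / (p - 1) / p ^ n).
  { unfold Rdiv. split. apply Rmult_le_pos; [lra| left; apply Rinv_0_lt_compat; lra].
    apply Rmult_le_compat_r; [left; apply Rinv_0_lt_compat; lra|]. exact B2. }
  unfold Rdiv in *. apply Rabs_le. split; nra.
Qed.

Lemma qg_nez : not_ending_in_zeros (qg M p x).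
Proof.
  intros n. apply NNPP. intros Hn.
  assert (Hz : forall k, (n <= k)%nat -> qg M p x k = O).
  { intros k Hk. apply NNPP. intros Hk'. apply Hn. exists k; auto. }
  assert (Hs : forall j, st M p x (n + j) = st M p x n).
  { induction j. rewrite Nat.add_0_r; auto. rewrite Nat.add_succ_r, st_S, Hz by lia.
    rewrite IHj. simpl INR. unfold Rdiv; ring. }
  destruct (qg_inv n) as [H1 _].
  assert (x - st M p x n = 0).
  { apply (zero_lim p _ (INR M / (p - 1)) n); auto. intros m Hm.
    replace m with (n + (m - n))%nat by lia. rewrite <- (Hs (m - n)%nat).
    destruct (qg_inv (n + (m - n))) as [A1 A2]. rewrite Rabs_pos_eq; lra. }
  lra.
Qed.

Lemma min_diff (c a : nat -> nat) k : c k <> a k ->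
  exists n, c n <> a n /\ forall j, (j < n)%nat -> c j = a j.
Proof.
  induction k as [k IH] using (well_founded_induction Wf_nat.lt_wf). intros Hk.
  destruct (classic (forall j, (j < k)%nat -> c j = a j)) as [H|H].
  - exists k; auto.
  - apply not_all_ex_not in H. destruct H as [j Hj].
    apply imply_to_and in Hj. destruct Hj. apply (IH j); auto.
Qed.

Lemma qg_G k : (qg M p x k < M)%nat -> x - st M p x (S k) <= / p ^ S k.
Proof.
  intros Hl. pose proof (cD_max _ _ Hl) as Hf. fold (qg M p x k) in Hf.
  unfold test in Hf. destruct Rlt_dec as [|Hn]; [discriminate|].
  apply Rnot_lt_le in Hn. rewrite S_INR in Hn. rewrite st_S.
  unfold Rdiv in *. rewrite Rmult_plus_distr_r in Hn. lra.
Qed.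

Lemma qg_max c : digits M c -> not_ending_in_zeros c -> pi p c = x -> lex_le c (qg M p x).
Proof.
  intros Hd Hn Hc. unfold lex_le.
  destruct (classic (forall k, c k = qg M p x k)) as [H|H].
  - left. apply functional_extensionality. auto.
  - right. apply not_all_ex_not in H. destruct H as [k Hk].
    destruct (min_diff _ _ k Hk) as [n [Hn1 Hn2]]. exists n. split; auto.
    destruct (Nat.lt_ge_cases (c n) (qg M p x n)) as [|Hge]; auto. exfalso.
    assert (Hlt : (qg M p x n < c n)%nat) by lia.
    assert (Hl : (qg M p x n < M)%nat) by (specialize (Hd n); lia).
    pose proof (qg_G n Hl) as HG. rewrite st_S in HG.
    rewrite (pi_split M p c (S n) Hd Hp) in Hc.
    assert (Hpos : 0 < pi p (shift (S n) c)).
    { apply (pi_pos M). intros j; apply Hd. auto.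
      destruct (Hn (S n)) as [j [Hj1 Hj2]]. exists (j - S n)%nat. unfold shift.
      replace (S n + (j - S n))%nat with j by lia. auto. }
    simpl ps in Hc. rewrite (ps_prefix p c (qg M p x) n Hn2) in Hc. rewrite <- st_ps in Hc.
    assert (0 < p ^ S n) by (apply pow_lt; lra).
    assert (0 < pi p (shift (S n) c) / p ^ S n) by (apply Rdiv_lt_0_compat; lra).
    assert (INR (qg M p x n) + 1 <= INR (c n)) by (rewrite <- S_INR; apply le_INR; lia).
    assert ((INR (qg M p x n) + 1) / p ^ S n <= INR (c n) / p ^ S n).
    { unfold Rdiv. apply Rmult_le_compat_r; [left; apply Rinv_0_lt_compat; lra| lra]. }
    unfold Rdiv in *. rewrite Rmult_plus_distr_r in H2. simpl in *. lra.
Qed.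


End Alg.

Lemma qg_is_quasi M p : 1 < p -> p <= INR M + 1 -> quasi_greedy M p (qg M p 1).
Proof.
  intros Hp HpM.
  assert (H1 : 1 <= INR M / (p - 1)).
  { apply (Rmult_le_reg_r (p - 1)). lra. unfold Rdiv. rewrite Rmult_assoc, Rinv_l; lra. }
  split; [apply qg_digits|]. split; [apply qg_nez; auto; lra|].
  split; [apply qg_pi; auto; lra|]. intros b Hb1 Hb2 Hb3. apply qg_max; auto; lra.
Qed.

Lemma lex_antisym a b : lex_le a b -> lex_le b a -> a = b.
Proof.
  intros [H|[n [H1 H2]]] [G|[m [G1 G2]]]; auto.
  destruct (Nat.lt_total n m) as [Hl|[He|Hl]].
  - specialize (G1 n Hl). lia.
  - subst; lia.
  - specialize (H1 m Hl). lia.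
Qed.

Lemma quasi_unique M p a : 1 < p -> p <= INR M + 1 -> quasi_greedy M p a -> a = qg M p 1.
Proof.
  intros Hp HpM Ha. pose proof (qg_is_quasi M p Hp HpM) as Hq.
  destruct Ha as [A1 [A2 [A3 A4]]]. destruct Hq as [Q1 [Q2 [Q3 Q4]]].
  apply lex_antisym; auto.
Qed.


Lemma qg1_first M p : (0 < M)%nat -> 1 < p -> p <= INR M + 1 -> (1 <= qg M p 1 0)%nat.
Proof.
  intros HM Hp HpM. destruct (Nat.eq_dec (qg M p 1 0) 0) as [E|E]; [|lia]. exfalso.
  assert (H1 : 1 <= INR M / (p - 1)).
  { apply (Rmult_le_reg_r (p - 1)). lra. unfold Rdiv. rewrite Rmult_assoc, Rinv_l; lra. }
  assert (Hl : (qg M p 1 0 < M)%nat) by lia.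
  pose proof (qg_G M p 1 0 Hl) as HG.
  rewrite st_S in HG. rewrite E in HG. simpl in HG.
  pose proof (inv_lt1 p Hp). rewrite Rmult_1_r in HG. lra.
Qed.

Lemma G_pi M p k : 1 < p -> p <= INR M + 1 -> (qg M p 1 k < M)%nat ->
  pi p (shift (S k) (qg M p 1)) <= 1.
Proof.
  intros Hp HpM Hl.
  assert (H1 : 1 <= INR M / (p - 1)).
  { apply (Rmult_le_reg_r (p - 1)). lra. unfold Rdiv. rewrite Rmult_assoc, Rinv_l; lra. }
  pose proof (qg_G M p 1 k Hl) as HG.
  pose proof (qg_pi M p 1 Hp HpM ltac:(lra) H1) as HP.
  rewrite (pi_split M p _ (S k) (qg_digits M p 1) Hp) in HP. rewrite <- st_ps in HP.
  assert (0 < p ^ S k) by (apply pow_lt; lra).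
  assert (pi p (shift (S k) (qg M p 1)) / p ^ S k <= / p ^ S k) by lra.
  unfold Rdiv in H0. apply Rmult_le_reg_r with (/ p ^ S k). apply Rinv_0_lt_compat; lra. lra.
Qed.

Lemma ps_base_diff p1 p2 y n : 0 < p1 -> p1 <= p2 ->
  0 <= ps p1 y n - ps p2 y n /\
  ((1 <= n)%nat -> INR (y O) * (/ p1 - / p2) <= ps p1 y n - ps p2 y n).
Proof.
  intros H1 H2. induction n.
  - simpl. split. lra. intros; lia.
  - destruct IHn as [A B]. simpl ps.
    assert (0 < p1 ^ n) by (apply pow_lt; lra).
    assert (p1 ^ n <= p2 ^ n) by (apply pow_incr; lra).
    assert (0 <= INR (y n)) by apply pos_INR.
    assert (/ (p2 * p2 ^ n) <= / (p1 * p1 ^ n)) by (apply Rinv_le_contravar; nra).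
    assert (0 <= INR (y n) / (p1 * p1 ^ n) - INR (y n) / (p2 * p2 ^ n)).
    { unfold Rdiv. nra. }
    split. lra. intros _. destruct n.
    + simpl. unfold Rdiv. rewrite !Rmult_1_r. lra.
    + specialize (B ltac:(lia)). lra.
Qed.

Section Core.
Variables (M : nat) (s0 r : R).
Hypothesis HM : (0 < M)%nat.
Hypothesis Hs0 : 1 < s0.
Hypothesis Hr : s0 < r.

Definition C0 := r * r * INR M / (s0 - 1) + r.

Lemma upper_bound p1 p2 n : s0 <= p1 <= r -> s0 <= p2 <= r ->
  p1 <= INR M + 1 -> p2 <= INR M + 1 ->
  (forall k, (k < n)%nat -> qg M p1 1 k = qg M p2 1 k) ->
  Rabs (p1 - p2) <= C0 / s0 ^ n.
Proof.
  assert (HMp : 0 < INR M) by (apply lt_0_INR; lia).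
  assert (HC0 : r <= C0).
  { unfold C0. assert (0 <= r * r * INR M / (s0 - 1)).
    { apply Rmult_le_pos. nra. left; apply Rinv_0_lt_compat; lra. } lra. }
  assert (Main : forall p1 p2, s0 <= p1 <= r -> s0 <= p2 <= r -> p1 <= p2 ->
    p1 <= INR M + 1 -> p2 <= INR M + 1 ->
    (forall k, (k < n)%nat -> qg M p1 1 k = qg M p2 1 k) ->
    p2 - p1 <= C0 / s0 ^ n).
  { clear p1 p2. intros p1 p2 R1 R2 Hle M1 M2 Hag.
    assert (0 < s0 ^ n) by (apply pow_lt; lra).
    destruct n as [|n].
    - simpl. lra.
    - set (n' := S n) in *.
      assert (H1 : 1 <= INR M / (p1 - 1)).
      { apply (Rmult_le_reg_r (p1 - 1)). lra. unfold Rdiv. rewrite Rmult_assoc, Rinv_l; lra. }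
      assert (H2 : 1 <= INR M / (p2 - 1)).
      { apply (Rmult_le_reg_r (p2 - 1)). lra. unfold Rdiv. rewrite Rmult_assoc, Rinv_l; lra. }
      pose proof (qg_pi M p1 1 ltac:(lra) M1 ltac:(lra) H1) as P1.
      pose proof (qg_pi M p2 1 ltac:(lra) M2 ltac:(lra) H2) as P2.
      rewrite (pi_split M p1 _ n' (qg_digits M p1 1) ltac:(lra)) in P1.
      rewrite (pi_split M p2 _ n' (qg_digits M p2 1) ltac:(lra)) in P2.
      rewrite (ps_prefix p1 _ (qg M p2 1) n' Hag) in P1.
      destruct (pi_bounds M p1 (shift n' (qg M p1 1))) as [T1 _]. intros k; apply qg_digits. lra.
      destruct (pi_bounds M p2 (shift n' (qg M p2 1))) as [_ T2]. intros k; apply qg_digits. lra.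
      destruct (ps_base_diff p1 p2 (qg M p2 1) n' ltac:(lra) Hle) as [_ D].
      specialize (D ltac:(unfold n'; lia)).
      pose proof (qg1_first M p2 HM ltac:(lra) M2) as F.
      assert (F' : 1 <= INR (qg M p2 1 0)) by (apply (le_INR 1); auto).
      assert (0 < p1 ^ n') by (apply pow_lt; lra).
      assert (0 < p2 ^ n') by (apply pow_lt; lra).
      assert (s0 ^ n' <= p2 ^ n') by (apply pow_incr; lra).
      assert (Ta : 0 <= pi p1 (shift n' (qg M p1 1)) / p1 ^ n').
      { apply Rmult_le_pos; [lra| left; apply Rinv_0_lt_compat; lra]. }
      assert (Tb : pi p2 (shift n' (qg M p2 1)) / p2 ^ n' <= INR M / (s0 - 1) / s0 ^ n').
      { unfold Rdiv. apply Rmult_le_compat. apply (pi_bounds M); [intros k; apply qg_digits| lra].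
        left; apply Rinv_0_lt_compat; lra.
        apply (Rle_trans _ (INR M / (p2 - 1))). exact T2. unfold Rdiv.
        apply Rmult_le_compat_l; [lra|]. apply Rinv_le_contravar; lra.
        apply Rinv_le_contravar; lra. }
      assert (Hd : / p1 - / p2 <= INR M / (s0 - 1) / s0 ^ n').
      { assert (0 <= / p1 - / p2).
        { assert (/ p2 <= / p1) by (apply Rinv_le_contravar; lra). lra. }
        nra. }
      assert (E : p2 - p1 = p1 * p2 * (/ p1 - / p2)) by (field; lra).
      rewrite E.
      assert (0 <= / p1 - / p2).
      { assert (/ p2 <= / p1) by (apply Rinv_le_contravar; lra). lra. }
      assert (p1 * p2 <= r * r) by nra.
      assert (0 <= INR M / (s0 - 1) / s0 ^ n').
      { unfold Rdiv. apply Rmult_le_pos. apply Rmult_le_pos. lra. left; apply Rinv_0_lt_compat; lra. left; apply Rinv_0_lt_compat; lra. }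
      apply (Rle_trans _ (r * r * (INR M / (s0 - 1) / s0 ^ n'))).
      { apply Rmult_le_compat; nra. }
      unfold C0. unfold Rdiv. rewrite Rmult_plus_distr_r.
      assert (0 <= r * / s0 ^ n') by (apply Rmult_le_pos; [lra| left; apply Rinv_0_lt_compat; lra]).
      lra. }
  intros R1 R2 M1 M2 Hag.
  destruct (Rle_dec p1 p2).
  - rewrite Rabs_minus_sym. rewrite Rabs_pos_eq by lra. apply Main; auto.
  - rewrite Rabs_pos_eq by lra. apply Main; auto. lra. intros k Hk; symmetry; auto.
Qed.

Lemma lower_bound p1 p2 n : 1 < p1 <= r -> 1 < p2 -> p1 <= INR M + 1 -> p2 <= INR M + 1 ->
  (forall k, (k < n)%nat -> qg M p1 1 k = qg M p2 1 k) ->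
  (qg M p1 1 n < qg M p2 1 n)%nat ->
  (r - p1) / r ^ (S (S n)) <= pi r (qg M p2 1) - pi r (qg M p1 1).
Proof.
  intros R1 R2 M1 M2 Hag Hlt.
  assert (Hr1 : 1 < r) by lra.
  rewrite (pi_split M r (qg M p1 1) (S n) (qg_digits _ _ _) Hr1).
  rewrite (pi_split M r (qg M p2 1) (S n) (qg_digits _ _ _) Hr1).
  simpl ps. rewrite (ps_prefix r _ (qg M p2 1) n Hag).
  assert (Hl : (qg M p1 1 n < M)%nat) by (pose proof (qg_digits M p2 1 n); lia).
  pose proof (G_pi M p1 n ltac:(lra) M1 Hl) as G.
  assert (Ds : forall p0, digits M (shift (S n) (qg M p0 1))) by (intros p0 k; apply qg_digits).
  pose proof (pi_base M p1 r _ (Ds p1) ltac:(lra) ltac:(lra)) as B.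
  destruct (pi_bounds M r _ (Ds p2) Hr1) as [T2 _].
  destruct (pi_bounds M p1 _ (Ds p1) ltac:(lra)) as [T1 _].
  assert (INR (qg M p1 1 n) + 1 <= INR (qg M p2 1 n)) by (rewrite <- S_INR; apply le_INR; lia).
  assert (0 < r ^ n) by (apply pow_lt; lra).
  assert (p1 / r * pi p1 (shift (S n) (qg M p1 1)) <= p1 / r).
  { assert (0 < p1 / r) by (apply Rdiv_lt_0_compat; lra). nra. }
  replace (r ^ S (S n)) with (r * (r * r ^ n)) by reflexivity.
  replace (r ^ S n) with (r * r ^ n) by reflexivity.
  set (A := r * r ^ n).
  assert (0 < A) by (unfold A; nra).
  replace ((r - p1) / (r * A)) with ((1 - p1 / r) / A) by (field; split; lra).
  match goal with |- _ <= ?R => replace R with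
   ((INR (qg M p2 1 n) + pi r (shift (S n) (qg M p2 1)) - INR (qg M p1 1 n) - pi r (shift (S n) (qg M p1 1))) / A) by (field; lra) end.
  unfold Rdiv. apply Rmult_le_compat_r. left; apply Rinv_0_lt_compat; lra.
  unfold Rdiv in *. lra.
Qed.

Definition gam := ln s0 / ln r.

Lemma ln_pos' x : 1 < x -> 0 < ln x.
Proof. intros. rewrite <- ln_1. apply ln_increasing; lra. Qed.

Lemma gam_pos : 0 < gam.
Proof. unfold gam. apply Rdiv_lt_0_compat; apply ln_pos'; lra. Qed.

Lemma rpow_conv c n : 0 < c -> Rpower (c * / r ^ n) gam = Rpower c gam * / s0 ^ n.
Proof.
  intros Hc. rewrite <- Rpower_mult_distr; auto.
  2:{ apply Rinv_0_lt_compat, pow_lt; lra. }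
  f_equal. rewrite <- (Rpower_pow n r) by lra. rewrite <- (Rpower_pow n s0) by lra.
  rewrite <- !Rpower_Ropp. rewrite Rpower_mult. unfold Rpower. f_equal.
  unfold gam. assert (0 < ln r) by (apply ln_pos'; lra). field. lra.
Qed.

Lemma qg_eq_p p1 p2 : s0 <= p1 <= r -> s0 <= p2 <= r ->
  p1 <= INR M + 1 -> p2 <= INR M + 1 ->
  (forall k, qg M p1 1 k = qg M p2 1 k) -> p1 = p2.
Proof.
  intros. apply Rminus_diag_uniq. apply (zero_lim s0 _ C0 0); auto.
  intros n _. apply upper_bound; auto.
Qed.

Lemma pair_inj p1 p2 : s0 <= p1 < r -> s0 <= p2 < r ->
  p1 <= INR M + 1 -> p2 <= INR M + 1 ->
  pi r (qg M p1 1) = pi r (qg M p2 1) -> p1 = p2.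
Proof.
  intros R1 R2 M1 M2 E.
  destruct (classic (forall k, qg M p1 1 k = qg M p2 1 k)) as [H|H].
  - apply qg_eq_p; auto; lra.
  - exfalso. apply not_all_ex_not in H. destruct H as [k Hk].
    destruct (min_diff _ _ k Hk) as [n [Hn1 Hn2]].
    assert (0 < r ^ S (S n)) by (apply pow_lt; lra).
    destruct (Nat.lt_gt_cases (qg M p1 1 n) (qg M p2 1 n)) as [[Hl|Hl] _]; auto.
    + pose proof (lower_bound p1 p2 n ltac:(lra) ltac:(lra) M1 M2 Hn2 Hl).
      assert (0 < (r - p1) / r ^ S (S n)) by (apply Rdiv_lt_0_compat; lra). lra.
    + pose proof (lower_bound p2 p1 n ltac:(lra) ltac:(lra) M2 M1 ltac:(intros; symmetry; auto) Hl).
      assert (0 < (r - p2) / r ^ S (S n)) by (apply Rdiv_lt_0_compat; lra). lra.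
Qed.

Definition Kh (eta : R) := C0 / Rpower (eta / (r * r)) gam.

Lemma C0_pos : 0 < C0.
Proof. unfold C0. assert (0 <= r * r * INR M / (s0 - 1)).
  { apply Rmult_le_pos. apply Rmult_le_pos. nra. apply pos_INR. left; apply Rinv_0_lt_compat; lra. } lra. Qed.

Lemma pair_holder eta p1 p2 : 0 < eta -> s0 <= p1 <= r - eta -> s0 <= p2 <= r - eta ->
  p1 <= INR M + 1 -> p2 <= INR M + 1 ->
  Rabs (p1 - p2) <= Kh eta * Rpower (Rabs (pi r (qg M p1 1) - pi r (qg M p2 1))) gam.
Proof.
  intros He R1 R2 M1 M2.
  assert (HK : 0 < Kh eta).
  { unfold Kh. apply Rdiv_lt_0_compat. apply C0_pos. unfold Rpower; apply exp_pos. }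
  assert (HRP : 0 < Rpower (Rabs (pi r (qg M p1 1) - pi r (qg M p2 1))) gam) by (unfold Rpower; apply exp_pos).
  destruct (classic (forall k, qg M p1 1 k = qg M p2 1 k)) as [H|H].
  - rewrite (qg_eq_p p1 p2); auto; try lra. rewrite Rminus_diag, Rabs_R0. apply Rmult_le_pos; [lra| unfold Rpower; left; apply exp_pos].
  - apply not_all_ex_not in H. destruct H as [k Hk].
    destruct (min_diff _ _ k Hk) as [n [Hn1 Hn2]].
    pose proof (upper_bound p1 p2 n ltac:(lra) ltac:(lra) M1 M2 Hn2) as U.
    assert (L : eta / (r * r) * / r ^ n <= Rabs (pi r (qg M p1 1) - pi r (qg M p2 1))).
    { assert (0 < r ^ n) by (apply pow_lt; lra).
      replace (eta / (r * r) * / r ^ n) with (eta / r ^ S (S n)).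
      2:{ replace (r ^ S (S n)) with (r * (r * r ^ n)) by reflexivity. field. split; lra. }
      assert (0 < r ^ S (S n)) by (apply pow_lt; lra).
      assert (0 < eta / r ^ S (S n)) by (apply Rdiv_lt_0_compat; lra).
      destruct (Nat.lt_gt_cases (qg M p1 1 n) (qg M p2 1 n)) as [[Hl|Hl] _]; auto.
      + pose proof (lower_bound p1 p2 n ltac:(lra) ltac:(lra) M1 M2 Hn2 Hl).
        assert (eta / r ^ S (S n) <= (r - p1) / r ^ S (S n)).
        { unfold Rdiv. apply Rmult_le_compat_r. left; apply Rinv_0_lt_compat; lra. lra. }
        rewrite Rabs_minus_sym. rewrite Rabs_pos_eq; lra.
      + pose proof (lower_bound p2 p1 n ltac:(lra) ltac:(lra) M2 M1 ltac:(intros; symmetry; auto) Hl).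
        assert (eta / r ^ S (S n) <= (r - p2) / r ^ S (S n)).
        { unfold Rdiv. apply Rmult_le_compat_r. left; apply Rinv_0_lt_compat; lra. lra. }
        rewrite Rabs_pos_eq; lra. }
    assert (0 < eta / (r * r)) by (apply Rdiv_lt_0_compat; nra).
    assert (Hpos : 0 < eta / (r * r) * / r ^ n) by (apply Rmult_lt_0_compat; [lra| apply Rinv_0_lt_compat, pow_lt; lra]).
    pose proof (Rle_Rpower_l _ _ gam (Rlt_le _ _ gam_pos) (conj Hpos L)) as RP.
    rewrite rpow_conv in RP by lra.
    assert (0 < Rpower (eta / (r * r)) gam) by (unfold Rpower; apply exp_pos).
    apply (Rle_trans _ _ _ U).
    apply (Rle_trans _ (Kh eta * (Rpower (eta / (r * r)) gam * / s0 ^ n))).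
    + unfold Kh. right. field. split. apply pow_nonzero; lra. lra.
    + apply Rmult_le_compat_l; lra.
Qed.

End Core.


Definition lsum {T} (l : list T) (f : T -> R) : R := fold_right (fun x acc => f x + acc) 0 l.

Lemma lsum_app {T} (l1 l2 : list T) f : lsum (l1 ++ l2) f = lsum l1 f + lsum l2 f.
Proof. induction l1; simpl. ring. unfold lsum in *. simpl. rewrite IHl1. ring. Qed.

Lemma lsum_map {T U} (l : list T) (h : T -> U) f : lsum (map h l) f = lsum l (fun x => f (h x)).
Proof. induction l; simpl; auto. unfold lsum in *; simpl. rewrite IHl. auto. Qed.

Lemma lsum_le {T} (l : list T) f g : (forall x, In x l -> f x <= g x) -> lsum l f <= lsum l g.
Proof. induction l; simpl; intros H. unfold lsum; simpl; lra. unfold lsum in *; simpl.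
  assert (f a <= g a) by (apply H; auto). assert (fold_right (fun x acc => f x + acc) 0 l <= fold_right (fun x acc => g x + acc) 0 l) by (apply IHl; auto). lra. Qed.

Lemma lsum_nonneg {T} (l : list T) f : (forall x, 0 <= f x) -> 0 <= lsum l f.
Proof. intros H; induction l; unfold lsum in *; simpl. lra. specialize (H a). lra. Qed.

Lemma lsum_incl {T} (f : T -> R) (L : list T) : forall Box, (forall x, 0 <= f x) -> NoDup L -> incl L Box -> lsum L f <= lsum Box f.
Proof.
  induction L as [|a L IH]; intros Box Hf Hn Hi.
  - unfold lsum at 1; simpl. apply lsum_nonneg; auto.
  - assert (Ha : In a Box) by (apply Hi; simpl; auto).
    destruct (in_split _ _ Ha) as [B1 [B2 HB]]. subst Box.
    inversion Hn; subst.
    assert (lsum L f <= lsum (B1 ++ B2) f).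
    { apply IH; auto. intros y Hy. assert (In y (B1 ++ a :: B2)) by (apply Hi; simpl; auto).
      apply in_app_or in H. apply in_or_app. destruct H as [H|H]; auto. simpl in H. destruct H; subst; auto.
      contradiction. }
    rewrite lsum_app in *. unfold lsum in *; simpl in *. lra.
Qed.

Lemma sum_n_lsum (h : nat -> R) N : sum_n h N = lsum (seq 0 (S N)) h.
Proof.
  induction N. rewrite sum_O. unfold lsum; simpl. ring.
  rewrite sum_Sn, IHN. rewrite (seq_S (S N) 0). rewrite lsum_app. unfold lsum at 3; simpl. unfold plus; simpl. ring.
Qed.

Lemma lsum_prod {A B} (l : list A) (l' : list B) f :
  lsum (list_prod l l') f = lsum l (fun m => lsum l' (fun i => f (m, i))).
Proof. induction l; simpl. auto. rewrite lsum_app, lsum_map, IHl. unfold lsum at 3; simpl. auto. Qed.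

Lemma geom_lsum eps n : lsum (seq 0 n) (fun m => eps / 2 ^ (S m)) = eps * (1 - / 2 ^ n).
Proof.
  induction n. unfold lsum; simpl; try field.
  rewrite seq_S, lsum_app, IHn. unfold lsum; simpl. assert (0 < 2 ^ n) by (apply pow_lt; lra). field. lra.
Qed.

Lemma H_null_sub s (E F : R -> Prop) : (forall x, F x -> E x) -> H_null s E -> H_null s F.
Proof. intros H HE eta eps He Hp. destruct (HE eta eps He Hp) as [a [b [H1 [H2 H3]]]].
  exists a, b. split; auto. Qed.

Lemma H_null_union s (E : nat -> R -> Prop) (F : R -> Prop) :
  (forall m, H_null s (E m)) -> (forall x, F x -> exists m, E m x) -> H_null s F.
Proof.
  intros HE HF eta eps He Hp.
  assert (Hc : forall m, exists ab : (nat -> R) * (nat -> R),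
    (forall i, fst ab i < snd ab i /\ snd ab i - fst ab i <= eta) /\
    (forall x, E m x -> exists i, fst ab i <= x <= snd ab i) /\
    (forall n, sum_n (fun i => Rpower (snd ab i - fst ab i) s) n <= eps / 2 ^ (S m))).
  { intros m. assert (0 < eps / 2 ^ S m) by (apply Rdiv_lt_0_compat; [lra| apply pow_lt; lra]).
    destruct (HE m eta _ He H) as [a [b Hab]]. exists (a, b). exact Hab. }
  destruct (choice _ Hc) as [ab Hab].
  exists (fun k => fst (ab (fst (of_nat k))) (snd (of_nat k))).
  exists (fun k => snd (ab (fst (of_nat k))) (snd (of_nat k))).
  split; [|split].
  - intros k. apply Hab.
  - intros x Fx. destruct (HF x Fx) as [m Hm]. destruct (proj1 (proj2 (Hab m)) x Hm) as [i Hi].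
    exists (to_nat (m, i)). rewrite cancel_of_to. simpl. auto.
  - intros N. set (f := fun mi : nat * nat => Rpower (snd (ab (fst mi)) (snd mi) - fst (ab (fst mi)) (snd mi)) s).
    assert (Hf : forall mi, 0 <= f mi) by (intros; unfold f, Rpower; left; apply exp_pos).
    rewrite sum_n_lsum.
    change (lsum (seq 0 (S N)) (fun k => f (of_nat k)) <= eps).
    rewrite <- lsum_map.
    apply (Rle_trans _ (lsum (list_prod (seq 0 (S N)) (seq 0 (S N))) f)).
    + apply lsum_incl; auto.
      * apply Injective_map_NoDup. intros k1 k2 Ek. rewrite <- (cancel_to_of k1), <- (cancel_to_of k2), Ek. auto.
        apply seq_NoDup.
      * intros mi Hmi. apply in_map_iff in Hmi. destruct Hmi as [k [Ek Hk]]. apply in_seq in Hk.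
        destruct mi as [m i]. pose proof (to_nat_non_decreasing m i). rewrite <- Ek, cancel_to_of in H.
        apply in_prod; apply in_seq; lia.
    + rewrite lsum_prod.
      apply (Rle_trans _ (lsum (seq 0 (S N)) (fun m => eps / 2 ^ (S m)))).
      * apply lsum_le. intros m _. rewrite <- sum_n_lsum. unfold f; simpl. apply Hab.
      * rewrite geom_lsum. assert (0 < / 2 ^ S N) by (apply Rinv_0_lt_compat, pow_lt; lra). nra.
Qed.


Lemma holder_null (X Y : R -> Prop) (g : R -> R) K ga s :
  0 < K -> 0 < ga -> 0 <= s ->
  (forall x x', X x -> X x' -> Rabs (g x - g x') <= K * Rpower (Rabs (x - x')) ga) ->
  (forall y, Y y -> exists x, X x /\ g x = y) ->
  H_null s X -> H_null (s / ga) Y.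
Proof.
  intros HK Hg Hs Hh HY HX eta eps He Hp.
  set (c2 := Rpower (2 * K) (s / ga)).
  assert (Hc2 : 0 < c2) by (unfold c2, Rpower; apply exp_pos).
  set (eta' := Rpower (eta / (2 * K)) (/ ga)).
  assert (He' : 0 < eta') by (unfold eta', Rpower; apply exp_pos).
  assert (Hp' : 0 < eps / c2) by (apply Rdiv_lt_0_compat; lra).
  destruct (HX eta' (eps / c2) He' Hp') as [a [b [H1 [H2 H3]]]].
  set (c := fun i => epsilon (inhabits 0) (fun x => X x /\ a i <= x <= b i)).
  set (rho := fun i => K * Rpower (b i - a i) ga).
  assert (Hrho : forall i, 0 < rho i).
  { intros i. unfold rho. apply Rmult_lt_0_compat; auto. unfold Rpower; apply exp_pos. }
  exists (fun i => g (c i) - rho i), (fun i => g (c i) + rho i).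
  split; [|split].
  - intros i. specialize (Hrho i). split. lra.
    destruct (H1 i) as [A1 A2].
    assert (Rpower (b i - a i) ga <= Rpower eta' ga) by (apply Rle_Rpower_l; lra).
    unfold eta' in H. rewrite Rpower_mult in H. rewrite Rinv_l in H by lra.
    rewrite Rpower_1 in H by (apply Rdiv_lt_0_compat; lra).
    unfold rho. replace (g (c i) + K * Rpower (b i - a i) ga - (g (c i) - K * Rpower (b i - a i) ga))
      with (2 * K * Rpower (b i - a i) ga) by ring.
    apply (Rmult_le_compat_l (2 * K)) in H; [|lra].
    replace (2 * K * (eta / (2 * K))) with eta in H by (field; lra). lra.
  - intros y Yy. destruct (HY y Yy) as [x [Xx Gx]]. destruct (H2 x Xx) as [i Hi].
    exists i.
    assert (Hc : X (c i) /\ a i <= c i <= b i).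
    { unfold c. apply epsilon_spec. exists x; auto. }
    destruct Hc as [Xc Ic].
    assert (Rabs (g x - g (c i)) <= rho i).
    { destruct (Req_dec x (c i)) as [E|E].
      - rewrite E, Rminus_diag, Rabs_R0. left; auto.
      - apply (Rle_trans _ _ _ (Hh x (c i) Xx Xc)). unfold rho. apply Rmult_le_compat_l; [lra|].
        apply Rle_Rpower_l. lra. split. apply Rabs_pos_lt; lra.
        apply Rabs_le; lra. }
    subst y. revert H. unfold Rabs. destruct Rcase_abs; intros; split; lra.
  - intros n.
    assert (E : forall i, Rpower (g (c i) + rho i - (g (c i) - rho i)) (s / ga) = c2 * Rpower (b i - a i) s).
    { intros i. replace (g (c i) + rho i - (g (c i) - rho i)) with (2 * K * Rpower (b i - a i) ga) by (unfold rho; ring).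
      unfold c2. rewrite <- Rpower_mult_distr; [|lra| unfold Rpower; apply exp_pos].
      rewrite Rpower_mult. f_equal. f_equal. field. lra. }
    rewrite (sum_n_ext _ _ n E).
    rewrite (sum_n_ext _ (fun i => mult c2 (Rpower (b i - a i) s))) by reflexivity.
    rewrite sum_n_mult_l. unfold mult; simpl.
    specialize (H3 n). apply (Rmult_le_compat_l c2) in H3; [|lra].
    replace (c2 * (eps / c2)) with eps in H3 by (field; lra). exact H3.
Qed.

Lemma hdim_nonneg E : Rbar_le (Finite 0) (hdim E).
Proof.
  unfold hdim. destruct (Glb_Rbar_correct (fun s => 0 <= s /\ H_null s E)) as [_ G].
  apply G. intros x [Hx _]. simpl. auto.
Qed.

Lemma hdim_bound (X Y : R -> Prop) ga e : 0 < ga -> 0 < e -> / ga <= 1 + e ->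
  (forall s, 0 <= s -> H_null s X -> H_null (s / ga) Y) ->
  Rbar_le (hdim Y) (Rbar_mult (1 + e) (hdim X)).
Proof.
  intros Hg He Hge HXY.
  pose proof (hdim_nonneg X) as N.
  unfold hdim in *.
  destruct (Glb_Rbar_correct (fun s => 0 <= s /\ H_null s X)) as [LX GX].
  destruct (Glb_Rbar_correct (fun s => 0 <= s /\ H_null s Y)) as [LY GY].
  destruct (Glb_Rbar (fun s => 0 <= s /\ H_null s X)) as [d| |] eqn:Ed; rewrite ?Ed in LX, GX, N.
  - simpl in N.
    assert (Key : forall t, d < t -> Rbar_le (Glb_Rbar (fun s => 0 <= s /\ H_null s Y)) (Finite (t / ga))).
    { intros t Ht. apply NNPP. intros Hn.
      assert (Hlb : Rbar_is_lower_bound (fun s => 0 <= s /\ H_null s X) (Finite t) \/ True) by auto.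
      assert (Hex : exists s, (0 <= s /\ H_null s X) /\ s < t).
      { apply NNPP. intros Hne. 
        assert (Rbar_le (Finite t) (Finite d)).
        { apply GX. intros s Hs. simpl. apply Rnot_lt_le. intros Hst. apply Hne. exists s; auto. }
        simpl in H. lra. }
      destruct Hex as [s [[Hs0 Hs] Hst]]. apply Hn.
      apply (Rbar_le_trans _ (Finite (s / ga))).
      apply LY. split. apply Rmult_le_pos; [lra| left; apply Rinv_0_lt_compat; lra]. apply HXY; auto.
      simpl. unfold Rdiv. apply Rmult_le_compat_r; [left; apply Rinv_0_lt_compat; lra| lra]. }
    simpl.
    destruct (Glb_Rbar (fun s => 0 <= s /\ H_null s Y)) as [h| |] eqn:Eh; simpl; auto.
    + apply Rnot_lt_le. intros Hlt.
      assert (d * / ga < h).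
      { assert (d * / ga <= (1 + e) * d) by (rewrite Rmult_comm; apply Rmult_le_compat_r; lra). lra. }
      set (t := d + (h - d / ga) * ga / 2).
      assert (Hdt : d < t).
      { unfold t. assert (0 < (h - d / ga) * ga / 2). { unfold Rdiv in *. apply Rmult_lt_0_compat; [|lra]. nra. } lra. }
      specialize (Key t Hdt). simpl in Key.
      unfold t in Key. replace ((d + (h - d / ga) * ga / 2) / ga) with (d / ga + (h - d / ga) / 2) in Key by (field; lra).
      unfold Rdiv in *. lra.
    + specialize (Key (d + 1) ltac:(lra)). simpl in Key. auto.
  - simpl.
    destruct (Rle_dec 0 (1 + e)) as [H|H]; [|lra].
    destruct (Rle_lt_or_eq_dec 0 (1 + e) H); [|lra].
    destruct (Glb_Rbar (fun s => 0 <= s /\ H_null s Y)); simpl; auto.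
  - simpl in N; try contradiction.
Qed.


Definition cons_seq (d : nat) (y : nat -> nat) : nat -> nat :=
  fun k => match k with O => d | S k' => y k' end.

Lemma pi_cons M u d y : digits M y -> (d <= M)%nat -> 1 < u ->
  pi u (cons_seq d y) = INR d / u + pi u y / u.
Proof.
  intros Hy Hd Hu.
  assert (digits M (cons_seq d y)) by (intros [|k]; simpl; auto).
  rewrite (pi_split M u _ 1 H Hu). simpl. f_equal. field. lra.
  change (pi u (shift 1 (cons_seq d y))) with (pi u y). field. lra.
Qed.

Lemma U_lower M u : (0 < M)%nat -> U M u -> 3 / 2 < u.
Proof.
  intros HM [[Hu1 Hu2] [x [[Hx1 Hx2] Hx3]]].
  destruct (Rlt_le_dec (3/2) u) as [|Hle]; auto. exfalso.
  assert (HMr : 1 <= INR M) by (apply (le_INR 1); lia).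
  assert (Hup : u <= INR M + 1) by lra.
  assert (A1 : u <= INR M / (u - 1)).
  { apply (Rmult_le_reg_r (u - 1)). lra. unfold Rdiv. rewrite Rmult_assoc, Rinv_l by lra. nra. }
  assert (A2 : u - 1 <= INR M / (u - 1)).
  { apply (Rmult_le_reg_r (u - 1)). lra. unfold Rdiv. rewrite Rmult_assoc, Rinv_l by lra. nra. }
  set (b := cons_seq 0 (qg M u u)).
  set (c := cons_seq 1 (qg M u (u - 1))).
  assert (Db : digits M b) by (intros [|k]; simpl; [lia| apply qg_digits]).
  assert (Dc : digits M c) by (intros [|k]; simpl; [lia| apply qg_digits]).
  assert (Pb : pi u b = 1).
  { unfold b. rewrite (pi_cons M); [|apply qg_digits| lia| lra].
    rewrite qg_pi; auto; try lra. simpl. field. lra. }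
  assert (Pc : pi u c = 1).
  { unfold c. rewrite (pi_cons M); [|apply qg_digits| lia| lra].
    rewrite qg_pi; auto; try lra. simpl. field. lra. }
  pose proof (Hx3 b Db Pb). pose proof (Hx3 c Dc Pc).
  assert (b 0%nat = c 0%nat) by congruence. unfold b, c in H1. simpl in H1. lia.
Qed.

Lemma Ubar_bounds M p : (0 < M)%nat -> Ubar M p -> 3 / 2 <= p <= INR M + 1.
Proof.
  intros HM Hp. split.
  - apply Rnot_lt_le. intros Hl. destruct (Hp (3/2 - p)) as [u [Hu Hd]]. lra.
    pose proof (U_lower M u HM Hu). revert Hd. unfold Rabs. destruct Rcase_abs; intros; lra.
  - apply Rnot_lt_le. intros Hl. destruct (Hp (p - (INR M + 1))) as [u [Hu Hd]]. lra.
    destruct Hu as [[_ Hu] _]. revert Hd. unfold Rabs. destruct Rcase_abs; intros; lra.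
Qed.

Lemma ln_bound x y : 0 < x -> 0 < y -> ln x <= ln y + (x / y - 1).
Proof.
  intros Hx Hy. replace x with (y * (x / y)) at 1 by (field; lra).
  rewrite ln_mult by (try apply Rdiv_lt_0_compat; lra).
  assert (ln (x / y) <= x / y - 1).
  { rewrite <- (ln_exp (x / y - 1)). apply ln_le. apply Rdiv_lt_0_compat; lra.
    pose proof (exp_ineq1_le (x / y - 1)). lra. }
  lra.
Qed.

Theorem lemma6p1 (M : nat) (HM : (0 < M)%nat) (q : R)
  (Hq : Ubar M q) (HqM : q <> INR M + 1) :
  forall eps : R, 0 < eps ->
    exists delta : R, 0 < delta /\
      Rbar_le (hdim (fun p => Ubar M p /\ q - delta < p < q + delta))
              (Rbar_mult (1 + eps)
                 (hdim (pi_image (q + delta) (Udelta M delta q)))).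
Proof.
  intros eps Heps.
  destruct (Ubar_bounds M q HM Hq) as [Hq1 Hq2].
  assert (Hlq : 0 < ln q) by (apply ln_pos'; lra).
  set (delta := Rmin ((q - 1) / 2) (eps * ln q / (2 + eps))).
  assert (Hd1 : delta <= (q - 1) / 2) by apply Rmin_l.
  assert (Hd2 : delta <= eps * ln q / (2 + eps)) by apply Rmin_r.
  assert (Hd0 : 0 < delta).
  { unfold delta. apply Rmin_glb_lt. lra. apply Rdiv_lt_0_compat; [nra| lra]. }
  exists delta. split; auto.
  set (s0 := q - delta). set (r := q + delta).
  assert (Hs0 : 1 < s0) by (unfold s0; lra).
  assert (Hr : s0 < r) by (unfold s0, r; lra).
  set (ga := gam s0 r).
  assert (Hga : 0 < ga) by (apply gam_pos; auto).
  apply (hdim_bound _ _ ga eps Hga Heps).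
  -
    unfold ga, gam.
    assert (Hl0 : 0 < ln s0) by (apply ln_pos'; lra).
    assert (Hlr : ln r <= ln q + delta).
    { pose proof (ln_bound r q ltac:(lra) ltac:(lra)).
      assert (r / q - 1 <= delta).
      { unfold r. replace ((q + delta) / q - 1) with (delta / q) by (field; lra).
        apply (Rmult_le_reg_r q). lra. unfold Rdiv. rewrite Rmult_assoc, Rinv_l by lra. nra. }
      lra. }
    assert (Hls : ln q <= ln s0 + delta).
    { pose proof (ln_bound q s0 ltac:(lra) ltac:(lra)).
      assert (q / s0 - 1 <= delta).
      { unfold s0. replace (q / (q - delta) - 1) with (delta / (q - delta)) by (field; lra).
        apply (Rmult_le_reg_r (q - delta)). lra. unfold Rdiv. rewrite Rmult_assoc, Rinv_l by lra. nra. }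
      lra. }
    assert (delta * (2 + eps) <= eps * ln q).
    { apply (Rmult_le_compat_r (2 + eps)) in Hd2; [|lra].
      replace (eps * ln q / (2 + eps) * (2 + eps)) with (eps * ln q) in Hd2 by (field; lra). lra. }
    rewrite Rinv_div. apply (Rmult_le_reg_r (ln s0)); auto.
    unfold Rdiv. rewrite Rmult_assoc, Rinv_l by lra. nra.
  - intros s Hs HX.
    set (Y := fun p => Ubar M p /\ q - delta < p < q + delta).
    set (Ym := fun (m : nat) p => Y p /\ p <= r - / INR (S m)).
    apply (H_null_union _ Ym).
    2:{ intros p Yp. pose proof Yp as [_ [_ Hp2]].
        destruct (archimed_cor1 (r - p)) as [N [HN1 HN2]]. lra.
        exists (N - 1)%nat. split. exact Yp. replace (S (N - 1)) with N by lia. lra. }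
    intros m.
    set (eta := / INR (S m)).
    assert (Heta : 0 < eta) by (unfold eta; apply Rinv_0_lt_compat, lt_0_INR; lia).
    set (Xm := fun x => exists p, Ym m p /\ x = pi r (qg M p 1)).
    set (gs := fun x => epsilon (inhabits 0) (fun p => Ubar M p /\ q - delta < p < q + delta /\ x = pi r (qg M p 1))).
    assert (Hgs : forall p, Ym m p -> gs (pi r (qg M p 1)) = p).
    { intros p [[Up Ip] Hp].
      assert (Hs' : Ubar M (gs (pi r (qg M p 1))) /\ q - delta < gs (pi r (qg M p 1)) < q + delta /\
              pi r (qg M p 1) = pi r (qg M (gs (pi r (qg M p 1))) 1)).
      { unfold gs. apply epsilon_spec. exists p. auto. }
      destruct Hs' as [U2 [I2 E2]].
      pose proof (Ubar_bounds M _ HM U2). pose proof (Ubar_bounds M _ HM Up).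
      symmetry. apply (pair_inj M s0 r HM Hs0 Hr); unfold s0, r in *; try lra. }
    apply (holder_null Xm (Ym m) gs (Kh M s0 r eta) ga s).
    + unfold Kh. apply Rdiv_lt_0_compat. apply C0_pos; auto. unfold Rpower; apply exp_pos.
    + auto.
    + auto.
    + intros x x' [p [Hp ->]] [p' [Hp' ->]]. rewrite !Hgs by auto.
      destruct Hp as [[Up Ip] Hp]. destruct Hp' as [[Up' Ip'] Hp'].
      pose proof (Ubar_bounds M _ HM Up). pose proof (Ubar_bounds M _ HM Up').
      apply (pair_holder M s0 r HM Hs0 Hr); unfold s0, r, eta in *; auto; try (split; lra); try lra.
    + intros y Hy. exists (pi r (qg M y 1)). split. exists y; auto. apply Hgs; auto.
    + refine (H_null_sub _ _ _ _ HX). intros x [p [[[Up Ip] _] ->]].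
      pose proof (Ubar_bounds M _ HM Up).
      exists (qg M p 1). split; auto. exists p. split; auto. split; auto.
      apply qg_is_quasi; lra.
Qed.
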